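(* Let $n$ be a nonnegative integer and let $a,b,c\in\mathbb{C}$ be such that all hypergeometric series and quotients below are defined (no lower parameter is zero or a negative integer). Then \[ {}_4F_3\!\left(\left.{-n,\frac{a}{2},\frac{a+1}{2},b \atop a,1+a-c,c}\right| 4\right) =\frac{(c-b)_n}{(c)_n}\, {}_4F_3\!\left(\left.{-n,1-c-n,b,1+b-c \atop 1+a-c,\frac{1+b-c-n}{2},\frac{2+b-c-n}{2}}\right| \frac{1}{4}\right). \]
   Context: For $a\in\mathbb{C}$, $(a)_0=1$ and $(a)_k=a(a+1)\cdots(a+k-1)$ for $k\ge1$. The hypergeometric series is ${}_rF_s\!\left(\left.{\alpha_1,\ldots,\alpha_r\atop \beta_1,\ldots,\beta_s}\right|z\right)=\sum_{k\ge0}\frac{(\alpha_1)_k\cdots(\alpha_r)_k}{k!(\beta_1)_k\cdots(\beta_s)_k}z^k$, with no lower parameter zero or a negative integer; when an upper parameter is $-n$ ($n$ a nonnegative integer) it is a finite sum over $0\le k\le n$. *)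

(* Defs.v *)
From mathcomp Require Import all_boot all_algebra.
From mathcomp Require Export complex reals.
Set Implicit Arguments. Unset Strict Implicit. Unset Printing Implicit Defensive.
Import GRing.Theory Num.Theory.
Local Open Scope ring_scope.

Definition poch {F : fieldType} (a : F) (k : nat) : F :=
  \prod_(i < k) (a + i%:R).

(* Terminating hypergeometric series rF_s whose first upper parameter is -n:
   upper parameters (-n) :: us, lower parameters ls, argument z.
   Since (-n)_k = 0 for k > n, the series is the finite sum over 0 <= k <= n. *)
Definition hypF_term {F : fieldType} (n : nat) (us ls : seq F) (z : F) : F :=
  \sum_(k < n.+1)
    (poch (- n%:R) k * \prod_(u <- us) poch u k)
    / (k`!%:R * \prod_(l <- ls) poch l k) * z ^+ k.

Definition not_nonpos_int {F : fieldType} (x : F) : Prop :=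
  forall m : nat, x <> - m%:R.

(* Main.v *)
Require Import Defs.
From mathcomp Require Import all_boot all_algebra ring.
From mathcomp Require Import complex reals.
Set Implicit Arguments. Unset Strict Implicit. Unset Printing Implicit Defensive.
Import GRing.Theory Num.Theory.
Local Open Scope ring_scope.

Section P.
Variable F : numFieldType.
Implicit Types x y : F.

Lemma poch0 x : poch x 0 = 1.
Proof. by rewrite /poch big_ord0. Qed.

Lemma pochS x k : poch x k.+1 = poch x k * (x + k%:R).
Proof. by rewrite /poch big_ord_recr. Qed.

Lemma poch_add x m k : poch x (m + k) = poch x m * poch (x + m%:R) k.
Proof.
elim: k => [|k IH]; first by rewrite addn0 poch0 mulr1.
by rewrite addnS !pochS IH natrD -mulrA addrA.
Qed.

Lemma poch_refl x k : poch x k = (-1)^+k * poch (1 - x - k%:R) k.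
Proof.
rewrite /poch [in RHS](reindex_inj rev_ord_inj) /=.
have -> : \prod_(j < k) (1 - x - k%:R + (rev_ord j)%:R)
   = \prod_(j < k) - (x + j%:R).
  apply: eq_bigr => j _; rewrite /= natrB ?ltn_ord // -addn1 natrD; ring.
by rewrite prodrN card_ord mulrA -exprMn mulrNN mulr1 expr1n mul1r.
Qed.

Lemma poch_ne0 x k : not_nonpos_int x -> poch x k != 0.
Proof.
move=> H; apply/prodf_neq0 => i _; rewrite addr_eq0; apply/eqP; exact: H.
Qed.

Lemma poch_double x k :
  poch (x / 2%:R) k * poch ((x + 1) / 2%:R) k * 4%:R ^+ k = poch x (k + k).
Proof.
elim: k => [|k IH]; first by rewrite !poch0 expr0 !mulr1.
rewrite addnS addSn !pochS exprS -IH !natrD.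
have h2 : (2%:R : F) != 0 by rewrite pnatr_eq0.
by field.
Qed.

Lemma vand x y k :
  poch (x + y) k = \sum_(i < k.+1) 'C(k, i)%:R * poch x i * poch y (k - i).
Proof.
elim: k => [|k IH]; first by rewrite big_ord1 bin0 !poch0 !mulr1.
set B := \sum_(i < k.+2) 'C(k, i)%:R * poch x i * poch y (k.+1 - i).
have HB : B = \sum_(i < k.+1) 'C(k, i)%:R * poch x i * (poch y (k-i) * (y + (k-i)%:R)).
  rewrite /B big_ord_recr /= bin_small // mul0r mul0r addr0.
  apply: eq_bigr => i _; rewrite subSn ?pochS //; exact: ltn_ord i.
have HA : \sum_(i < k.+1) 'C(k, i)%:R * poch x i.+1 * poch y (k - i)
   = \sum_(i < k.+1) 'C(k, i)%:R * poch x i * (x + i%:R) * poch y (k - i).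
  by apply: eq_bigr => i _; rewrite pochS mulrA.
rewrite big_ord_recl /=.
under eq_bigr do rewrite /bump leq0n add1n binS natrD !mulrDl subSS.
rewrite big_split /= addrA.
have -> : 'C(k.+1, 0)%:R * poch x 0 * poch y (k.+1 - 0)
   + \sum_(i < k.+1) 'C(k, i.+1)%:R * poch x i.+1 * poch y (k - i) = B.
  by rewrite /B [RHS]big_ord_recl /= !bin0.
rewrite HA HB pochS IH mulr_suml -big_split /=.
apply: eq_bigr => i _; rewrite natrB; last by rewrite -ltnS ltn_ord.
ring.
Qed.
Lemma pochN N m : poch (- N%:R) m = (-1)^+m * 'C(N, m)%:R * m`!%:R :> F.
Proof.
elim: m => [|m IH]; first by rewrite poch0 bin0 fact0 expr0 !mul1r.
have key : ('C(N,m.+1) * m.+1)%:R = (N%:R - m%:R) * 'C(N,m)%:R :> F.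
  rewrite mulnC mul_bin_left natrM; case: (leqP m N) => h; first by rewrite natrB.
  by rewrite bin_small // !mulr0.
have key2 : 'C(N,m.+1)%:R * (m.+1)`!%:R = (N%:R - m%:R) * 'C(N,m)%:R * m`!%:R :> F.
  by rewrite factS natrM mulrA -natrM key.
rewrite pochS IH -[RHS]mulrA key2 exprS; ring.
Qed.

Lemma cv N (B C : F) : poch C N != 0 ->
  \sum_(m < N.+1) poch (- N%:R) m * poch B m / (m`!%:R * poch C m)
  = poch (C - B) N / poch C N.
Proof.
move=> hC.
suff main : (\sum_(m < N.+1) poch (- N%:R) m * poch B m / (m`!%:R * poch C m))
   * poch C N = poch (C - B) N by rewrite -main mulfK.
rewrite mulr_suml (poch_refl (C - B)).
have -> : 1 - (C - B) - N%:R = B + (1 - C - N%:R) by ring.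
rewrite vand mulr_sumr; apply: eq_bigr => -[m hm] _ /=.
have hmN : (m <= N)%N by [].
have hCm : poch C m != 0.
  by move: hC; rewrite -(subnKC hmN) poch_add mulf_eq0 negb_or => /andP[].
have hf : (m`!%:R : F) != 0 by rewrite pnatr_eq0 -lt0n fact_gt0.
rewrite pochN.
have -> : poch C N = poch C m * poch (C + m%:R) (N - m) by rewrite -poch_add subnKC.
rewrite (poch_refl (C + m%:R)).
have -> : 1 - (C + m%:R) - (N - m)%:R = 1 - C - N%:R by rewrite natrB //; ring.
have -> : (-1)^+N = (-1)^+m * (-1)^+(N-m) :> F by rewrite -exprD subnKC.
by field; rewrite hCm hf.
Qed.

Lemma tri (G : nat -> nat -> F) n :
  \sum_(k < n.+1) \sum_(i < k.+1) G k i
  = \sum_(i < n.+1) \sum_(m < (n - i).+1) G (i + m)%N i.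
Proof.
elim: n => [|n IH]; first by rewrite !big_ord1.
rewrite big_ord_recr /= IH [RHS]big_ord_recr /= subnn big_ord1 addn0.
rewrite [\sum_(i < n.+2) G n.+1 i]big_ord_recr /= addrA; congr (_ + _).
rewrite -big_split; apply: eq_bigr => i _ /=.
rewrite subSn; last by rewrite -ltnS ltn_ord.
by rewrite [RHS]big_ord_recr /= addnS subnKC // -ltnS ltn_ord.
Qed.
Lemma vandA (c d : F) k :
  poch (c + d - 1 + k%:R) k
  = \sum_(i < k.+1) 'C(k, i)%:R * poch (c + (k - i)%:R) i * poch (d + i%:R) (k - i).
Proof.
rewrite (poch_refl (c + d - 1 + k%:R)).
have -> : 1 - (c + d - 1 + k%:R) - k%:R = (1 - c - k%:R) + (1 - d - k%:R) by ring.
rewrite vand mulr_sumr; apply: eq_bigr => -[i hi] _ /=.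
have hik : (i <= k)%N by [].
rewrite (poch_refl (1 - c - k%:R) i) (poch_refl (1 - d - k%:R) (k - i)).
have -> : 1 - (1 - c - k%:R) - i%:R = c + (k - i)%:R by rewrite natrB //; ring.
have -> : 1 - (1 - d - k%:R) - (k - i)%:R = d + i%:R by rewrite natrB //; ring.
have -> : (-1)^+k = (-1)^+i * (-1)^+(k-i) :> F by rewrite -exprD subnKC.
rewrite -(signr_odd _ i) -(signr_odd _ (k - i)).
by case: (odd i); case: (odd (k - i)); rewrite ?expr0 ?expr1; ring.
Qed.

Lemma termL n (a b c : F) k : poch a k != 0 -> poch (1 + a - c) k != 0 -> poch c k != 0 ->
  poch (- n%:R) k * (poch (a / 2%:R) k * (poch ((a + 1) / 2%:R) k * poch b k))
    / (k`!%:R * (poch a k * (poch (1 + a - c) k * poch c k))) * 4%:R ^+ k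
  = \sum_(i < k.+1) poch (- n%:R) k * poch b k
      / (i`!%:R * (k - i)`!%:R * poch c (k - i) * poch (1 + a - c) i).
Proof.
move=> pa pd pc.
have hf : (k`!%:R : F) != 0 by rewrite pnatr_eq0 -lt0n fact_gt0.
have h4 : (4%:R : F) ^+ k != 0 by rewrite expf_neq0 // pnatr_eq0.
transitivity (poch (- n%:R) k * poch b k / (k`!%:R * poch (1 + a - c) k * poch c k)
               * poch (c + (1 + a - c) - 1 + k%:R) k).
  have -> : c + (1 + a - c) - 1 + k%:R = a + k%:R by ring.
  rewrite -[in RHS](mulKf pa (poch (a + k%:R) k)) -poch_add -poch_double.
  by field; rewrite hf pa pd pc.
rewrite vandA mulr_sumr; apply: eq_bigr => -[i hi] _ /=.
have hik : (i <= k)%N by [].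
have pc' : poch c k = poch c (k - i) * poch (c + (k - i)%:R) i by rewrite -poch_add subnK.
have pd' : poch (1 + a - c) k = poch (1 + a - c) i * poch (1 + a - c + i%:R) (k - i)
  by rewrite -poch_add subnKC.
have hfk : (k`!%:R : F) = 'C(k, i)%:R * i`!%:R * (k - i)`!%:R
  by rewrite -(bin_fact hik) !natrM mulrA.
move: pc pd; rewrite pc' pd' hfk !mulf_eq0 !negb_or => /andP[pc1 pc2] /andP[pd1 pd2].
have hC : ('C(k, i)%:R : F) != 0 by rewrite pnatr_eq0 -lt0n bin_gt0.
have hfi : (i`!%:R : F) != 0 by rewrite pnatr_eq0 -lt0n fact_gt0.
have hfki : ((k - i)`!%:R : F) != 0 by rewrite pnatr_eq0 -lt0n fact_gt0.
by field; rewrite ?hC ?hfi ?hfki ?pc1 ?pc2 ?pd1 ?pd2.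
Qed.
Lemma main n (a b c : F)
  (ha : not_nonpos_int a)
  (hac : not_nonpos_int (1 + a - c))
  (hc : not_nonpos_int c)
  (h1 : not_nonpos_int ((1 + b - c - n%:R) / 2%:R))
  (h2 : not_nonpos_int ((2%:R + b - c - n%:R) / 2%:R)) :
  hypF_term n [:: a / 2%:R; (a + 1) / 2%:R; b] [:: a; 1 + a - c; c] 4%:R
  = poch (c - b) n / poch c n *
    hypF_term n [:: 1 - c - n%:R; b; 1 + b - c]
      [:: 1 + a - c; (1 + b - c - n%:R) / 2%:R; (2%:R + b - c - n%:R) / 2%:R]
      (4%:R)^-1.
Proof.
have pa k := poch_ne0 k ha.
have pd k := poch_ne0 k hac.
have pc k := poch_ne0 k hc.
have e2eq : (2%:R + b - c - n%:R) / 2%:R = ((1 + b - c - n%:R) + 1) / 2%:R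
  by congr (_ / _); ring.
have h4 k : (4%:R : F) ^+ k != 0 by rewrite expf_neq0 // pnatr_eq0.
have E k : poch ((1 + b - c - n%:R) / 2%:R) k * poch ((2%:R + b - c - n%:R) / 2%:R) k
    = poch (1 + b - c - n%:R) (k + k) / 4%:R ^+ k.
  by rewrite e2eq -poch_double mulfK.
have pe k : poch (1 + b - c - n%:R) (k + k) != 0.
  rewrite -poch_double !mulf_neq0 //; first exact: poch_ne0.
  by apply: poch_ne0; rewrite -e2eq.
rewrite /hypF_term.
rewrite (eq_bigr (fun k : 'I_n.+1 => \sum_(i < k.+1) poch (- n%:R) k * poch b k
      / (i`!%:R * (k - i)`!%:R * poch c (k - i) * poch (1 + a - c) i))); last first.
  by move=> k _; rewrite !big_cons !big_nil !mulr1 termL.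
rewrite (tri (fun k i => poch (- n%:R) k * poch b k
      / (i`!%:R * (k - i)`!%:R * poch c (k - i) * poch (1 + a - c) i))) /=.
rewrite mulr_sumr; apply: eq_bigr => -[i hi] _ /=.
have hin : (i <= n)%N by [].
under eq_bigr => m _ do rewrite addKn !poch_add.
have -> : - n%:R + i%:R = - (n - i)%:R :> F by rewrite natrB //; ring.
have hfi : (i`!%:R : F) != 0 by rewrite pnatr_eq0 -lt0n fact_gt0.
transitivity (poch (- n%:R) i * poch b i / (i`!%:R * poch (1 + a - c) i) *
   \sum_(m < (n - i).+1) poch (- (n - i)%:R) m * poch (b + i%:R) m / (m`!%:R * poch c m)).
  rewrite mulr_sumr; apply: eq_bigr => m _.
  have hfm : (m`!%:R : F) != 0 by rewrite pnatr_eq0 -lt0n fact_gt0.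
  by field; rewrite ?hfi ?hfm ?pd ?pc.
rewrite cv // !big_cons !big_nil !mulr1 E.
have F1 : poch c n = poch c (n - i) * poch (c + (n - i)%:R) i by rewrite -poch_add subnK.
have F1' : poch (1 - c - n%:R) i = (-1)^+i * poch (c + (n - i)%:R) i.
  by rewrite poch_refl; congr (_ * poch _ _); rewrite natrB //; ring.
have F2 : poch (1 + b - c) i = (-1)^+i * poch (c - b - i%:R) i.
  by rewrite poch_refl; congr (_ * poch _ _); ring.
have F5 : poch (1 + b - c - n%:R) (i + i) = poch (c - b - i%:R + (n - i)%:R) (i + i).
  rewrite poch_refl -signr_odd addnn odd_double expr0 mul1r.
  by congr (poch _ _); rewrite natrB // -muln2 natrM; ring.
have key : poch (c - b) n * poch (c - b - i%:R) i
    = poch (c - (b + i%:R)) (n - i) * poch (c - b - i%:R + (n - i)%:R) (i + i).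
  have -> : c - (b + i%:R) = c - b - i%:R by ring.
  rewrite -poch_add mulrC.
  have -> : (n - i + (i + i) = i + n)%N by rewrite addnA subnK // addnC.
  by rewrite poch_add subrK.
have pR := pe i; rewrite F5 in pR.
have pP := pc n; rewrite F1 mulf_eq0 negb_or in pP; case/andP: pP => pP1 pP2.
transitivity (poch (- n%:R) i * poch b i / (i`!%:R * poch (1 + a - c) i) *
   (poch (c - b) n * poch (c - b - i%:R) i) / (poch c (n - i) * poch (c - b - i%:R + (n - i)%:R) (i + i))).
  by rewrite key; field; rewrite ?hfi ?pd ?pR ?pP1.
rewrite F1 F1' F2 F5 -(signr_odd _ i).
by case: (odd i); rewrite /= ?expr0 ?expr1 exprVn; field; rewrite ?hfi ?pd ?pR ?pP1 ?pP2 ?h4.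
Qed.
End P.

Theorem proposition3p2 (R : realType) (n : nat) (a b c : R[i])
  (ha : not_nonpos_int a)
  (hac : not_nonpos_int (1 + a - c))
  (hc : not_nonpos_int c)
  (h1 : not_nonpos_int ((1 + b - c - n%:R) / 2%:R))
  (h2 : not_nonpos_int ((2%:R + b - c - n%:R) / 2%:R)) :
  hypF_term n [:: a / 2%:R; (a + 1) / 2%:R; b] [:: a; 1 + a - c; c] 4%:R
  = poch (c - b) n / poch c n *
    hypF_term n [:: 1 - c - n%:R; b; 1 + b - c]
      [:: 1 + a - c; (1 + b - c - n%:R) / 2%:R; (2%:R + b - c - n%:R) / 2%:R]
      (4%:R)^-1.
Proof. exact: (@main R[i] n a b c ha hac hc h1 h2). Qed.
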